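(* For every positive integer $h$, the sumset size set $\mathcal{R}_{\mathbf{Z}}(h,4)$ contains the $h$-term arithmetic progression $\{bh+1 : b \in [3,h+2]\}$.
   Context: For a positive integer $h$ and a finite set $A$ of integers, $hA$ denotes the set of all sums $a_1+\cdots+a_h$ with $a_1,\ldots,a_h \in A$ (not necessarily distinct). The sumset size set is $\mathcal{R}_{\mathbf{Z}}(h,k) = \{ |hA| : A \subseteq \mathbf{Z},\ |A| = k\}$. For real $u,v$, $[u,v] = \{n \in \mathbf{Z} : u \le n \le v\}$. *)

(* Defs.v *)
From mathcomp Require Import all_boot all_order all_algebra.
From mathcomp Require Import finmap.
Set Implicit Arguments. Unset Strict Implicit. Unset Printing Implicit Defensive.
Import GRing.Theory Num.Theory.
Local Open Scope fset_scope.
Local Open Scope ring_scope.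

Fixpoint sumset (h : nat) (A : {fset int}) : {fset int} :=
  match h with
  | 0%N => [fset (0 : int)]
  | h'.+1 => [fset (a + s : int) | a in A, s in sumset h' A]
  end.

Definition in_R_Z (h k n : nat) : Prop :=
  exists A : {fset int}, #|` A| = k /\ #|` sumset h A| = n.

(* Main.v *)
Require Import Defs.
From mathcomp Require Import all_boot all_order all_algebra.
From mathcomp Require Import finmap.
From mathcomp Require Import zify.
Set Implicit Arguments. Unset Strict Implicit. Unset Printing Implicit Defensive.
Import GRing.Theory Num.Theory.
Local Open Scope fset_scope.
Local Open Scope ring_scope.

Definition AA (k : nat) : {fset int} := [fset x in [:: 0; 1; k%:Z; (k.+1)%:Z]].

Lemma memA k x : (x \in AA k) = [|| x == 0, x == 1, x == k%:Z | x == (k.+1)%:Z].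
Proof. by rewrite /AA in_fset /= !inE. Qed.

Lemma memS k h x : x \in sumset h (AA k) <->
  exists i j : nat, [/\ (i <= h)%N, (j <= h)%N & x = (i + j * k)%N%:Z].
Proof.
elim: h x => [|h IH] x /=.
  rewrite inE; split; first by move/eqP=> ->; exists 0%N, 0%N.
  by case=> i [j [hi hj ->]]; apply/eqP; lia.
split.
  case/imfset2P => a; rewrite memA => ha [s hs ->].
  case/IH: hs => i [j [hi hj ->]].
  case/or4P: ha => /eqP ->.
  - by exists i, j; split; lia.
  - by exists i.+1, j; split; lia.
  - by exists i, j.+1; split; lia.
  - by exists i.+1, j.+1; split; lia.
case=> i [j [hi hj ->]].
pose e := (0 < i)%N; pose f := (0 < j)%N.
apply/imfset2P; exists ((e + f * k)%N%:Z).
  rewrite memA /e /f; case: (posnP i); case: (posnP j) => Hj Hi /=;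
  repeat (first [done | by apply/eqP; lia | apply/orP; first [left; by apply/eqP; lia | right]]).
exists ((i - e + (j - f) * k)%N%:Z).
  apply/IH; exists (i - e)%N, (j - f)%N; split => //; rewrite /e /f; case: (posnP i); case: (posnP j) => ? ? /=; lia.
rewrite /e /f; case: (posnP i); case: (posnP j) => ? ? /=; subst; rewrite ?subn0 ?mul0n ?addn0 ?add0n ?mul1n; rewrite -?PoszD; congr Posz; nia.
Qed.

Theorem mainTheorem4 (h : nat) (hpos : (0 < h)%N) (b : nat)
  (hb : (3 <= b <= h + 2)%N) :
  in_R_Z h 4 (b * h + 1)%N.
Proof.
pose k := b.-1.
exists (AA k); split.
  rewrite /AA card_fseq undup_id //= !inE; apply/and4P; split => //; lia.
have -> : sumset h (AA k) = [fset x in [seq n%:Z | n <- iota 0 (b * h + 1)]].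
  apply/fsetP => x; rewrite in_fset /=; apply/idP/idP.
    case/memS => i [j [hi hj ->]]; apply/mapP; exists (i + j * k)%N => //.
    rewrite mem_iota; nia.
  case/mapP => n; rewrite mem_iota => hn ->; apply/memS.
  have [hx|hx] := leqP (n %/ k) h.
    exists (n %% k)%N, (n %/ k)%N; split => //.
      have := ltn_pmod n (_ : 0 < k)%N; lia.
    by rewrite addnC -divn_eq.
  exists (n - h * k)%N, h; split => //.
    have := leq_trunc_div n k. 
    have : (h.+1 * k <= n)%N by rewrite -leq_divRL; lia.
    lia.
  have : (h.+1 * k <= n)%N by rewrite -leq_divRL; lia.
  lia.
rewrite card_fseq undup_id ?size_map ?size_iota //.
by rewrite map_inj_uniq ?iota_uniq // => ? ? [].
Qed.
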